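(* Let $(u_{k,\ell})_{k,\ell\in\mathbb Z_q}$ be as in the finite-spin model with $u=\min_{k\ne\ell}u_{k,\ell}>0$ and $U=\max_{k,\ell}u_{k,\ell}$, and let $d_{\max}\in\mathbb N_0$. Put $d(u,U,d_{\max})=2+\lfloor d_{\max}(u+U)/u\rfloor$. Then for every $d\ge d(u,U,d_{\max})$, every $\omega^0\in\mathbb Z_q^V$ whose set of broken edges $D$ satisfies $d_D\le d_{\max}$ is stable for the finite-spin model on $\mathcal T^d$, with stability constant $c=(d-1)u-d_{\max}(u+U)>0$.
   Context: $\mathcal T^d=(V,E)$ is the Cayley tree of order $d$ (every vertex has $d+1$ neighbours). Finite-spin model: spins in $\mathbb Z_q=\{0,\dots,q-1\}$, edge energy $\Phi(\omega_v,\omega_w)=u_{\omega_v,\omega_w}$ with $u_{k,\ell}\ge0$, $u_{k,k}=0$. Broken edges of $\omega^0$: $D=\{\{v,w\}\in E:\omega^0_v\ne\omega^0_w\}$; $d_D(v)$ is the number of edges of $D$ incident to $v$, $d_D=\max_v d_D(v)$. For $\omega,\omega^0$ differing at finitely many sites, $H(\omega)-H(\omega^0)=\sum_{\{v,w\}\in E}(\Phi(\omega_v,\omega_w)-\Phi(\omega^0_v,\omega^0_w))$. A configuration $\omega^0$ is stable with stability constant $c>0$ if for all $\omega$ differing from $\omega^0$ at finitely many sites, $H(\omega)-H(\omega^0)\ge c\sum_v\mathbf 1_{\omega_v\ne\omega^0_v}$. *)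

(* Defs.v *)
From HB Require Import structures.
From mathcomp Require Import all_boot all_order all_algebra.
From mathcomp Require Import reals.
Set Implicit Arguments. Unset Strict Implicit. Unset Printing Implicit Defensive.
Import Order.TTheory GRing.Theory Num.Theory.
Local Open Scope ring_scope.

(* Cayley tree T^d of order d: the Cayley graph of the free product of d+1
   copies of Z/2, i.e. reduced words over the alphabet 'I_d.+1 (no two
   consecutive equal letters); vertex s is adjacent to a*s for each letter a. *)
Definition reduced (d : nat) (s : seq 'I_d.+1) : bool :=
  sorted (fun a b => a != b) s.

Definition vertex (d : nat) := {s : seq 'I_d.+1 | reduced s}.

Definition nb_seq (d : nat) (a : 'I_d.+1) (s : seq 'I_d.+1) : seq 'I_d.+1 :=
  if s is b :: t then (if b == a then t else a :: s) else [:: a].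

Lemma nb_seq_reduced (d : nat) (a : 'I_d.+1) (s : seq 'I_d.+1) :
  reduced s -> reduced (nb_seq a s).
Proof.
case: s => [|b t] //= Hs.
case: eqP => [_|/eqP Hba].
  by case: t Hs => [|c t] //= /andP [].
by rewrite /reduced /= eq_sym Hba.
Qed.

Definition nb (d : nat) (v : vertex d) (a : 'I_d.+1) : vertex d :=
  exist _ (nb_seq a (val v)) (nb_seq_reduced a (svalP v)).

Definition broken_deg (d q : nat) (w0 : vertex d -> 'I_q) (v : vertex d) : nat :=
  #|[pred a : 'I_d.+1 | w0 v != w0 (nb v a)]|.

(* H(w) - H(w0) = sum over edges {v,w} of (Phi(w_v,w_w) - Phi(w0_v,w0_w)),
   computed from a finite duplicate-free list S of vertices containing every
   site where w and w0 differ (all other edge terms vanish).  Each edge with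
   both endpoints in S is met twice (once from each endpoint), hence weight 1/2;
   each edge with exactly one endpoint in S is met once. *)
Definition Hdiff (R : realType) (d q : nat) (u : 'I_q -> 'I_q -> R)
  (w w0 : vertex d -> 'I_q) (S : seq (vertex d)) : R :=
  \sum_(v <- S) \sum_(a : 'I_d.+1)
     (if nb v a \in S then 2^-1 else 1) *
     (u (w v) (w (nb v a)) - u (w0 v) (w0 (nb v a))).

Definition stable (R : realType) (d q : nat) (u : 'I_q -> 'I_q -> R)
  (w0 : vertex d -> 'I_q) (c : R) : Prop :=
  0 < c /\
  forall (w : vertex d -> 'I_q) (S : seq (vertex d)),
    uniq S -> (forall v, w v != w0 v -> v \in S) ->
    c * (count (fun v => w v != w0 v) S)%:R <= Hdiff u w w0 S.

Definition umax (R : realType) (q : nat) (u : 'I_q -> 'I_q -> R) : R :=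
  \big[Num.max/0]_(k : 'I_q) \big[Num.max/0]_(l : 'I_q) u k l.

(* u = min_{k <> l} u_{k,l} (the default umax is harmless: it dominates all entries) *)
Definition umin (R : realType) (q : nat) (u : 'I_q -> 'I_q -> R) : R :=
  \big[Num.min/umax u]_(k : 'I_q) \big[Num.min/umax u]_(l : 'I_q | l != k) u k l.

(* Main.v *)
Require Import Defs.
From HB Require Import structures.
From mathcomp Require Import all_boot all_order all_algebra.
From mathcomp Require Import reals.
Import Order.TTheory GRing.Theory Num.Theory.
Local Open Scope ring_scope.
Set Implicit Arguments. Unset Strict Implicit.

Lemma nb_inv (d : nat) (v : vertex d) a : nb (nb v a) a = v.
Proof.
apply: val_inj => /=; case: v => [s Hs] /=.
case: s Hs => [|b t] Hs; rewrite /nb_seq /=; first by rewrite eqxx.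
case: eqP => [<-|/eqP hba].
  case: t Hs => [|c t] /=; first by [].
  by move=> /andP [hbc _]; rewrite eq_sym (negbTE hbc).
by rewrite eqxx.
Qed.

Definition isp (d : nat) (v : vertex d) (a : 'I_d.+1) : bool :=
  if val v is b :: _ then b == a else false.

Lemma isp_nb (d : nat) (v : vertex d) a : isp (nb v a) a = ~~ isp v a.
Proof.
rewrite /isp; case: v => [s Hs] /=.
case: s Hs => [|b t] Hs; rewrite /nb_seq /=; first by rewrite eqxx.
case: eqP => [<-|/eqP hba] /=; last by rewrite eqxx.
case: t Hs => [|c t] /= // /andP [hbc _]; by rewrite eq_sym (negbTE hbc).
Qed.

Lemma nb_eqC (d : nat) (v x : vertex d) a : (nb v a == x) = (nb x a == v).
Proof.
by apply/eqP/eqP => <-; rewrite nb_inv.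
Qed.

Lemma sum_pick (R : realType) (T : eqType) (S : seq T) (y : T) (g : T -> R) :
  uniq S -> \sum_(x <- S) (if y == x then g x else 0) = if y \in S then g y else 0.
Proof.
elim: S => [|x S IH] /=; first by rewrite big_nil.
move=> /andP [hx hu]; rewrite big_cons IH // in_cons.
case: eqP => [->|_] /=; last by rewrite add0r.
by rewrite (negbTE hx) addr0.
Qed.

Lemma swap (R : realType) (d : nat) (S : seq (vertex d))
  (f : vertex d -> vertex d -> 'I_d.+1 -> R) : uniq S ->
  \sum_(v <- S) \sum_(a : 'I_d.+1) (if nb v a \in S then f v (nb v a) a else 0) =
  \sum_(v <- S) \sum_(a : 'I_d.+1) (if nb v a \in S then f (nb v a) v a else 0).
Proof.
move=> hu.
have E : forall v a, (if nb v a \in S then f v (nb v a) a else 0) =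
   \sum_(x <- S) (if nb v a == x then f v x a else 0).
  by move=> v a; rewrite sum_pick.
under eq_bigr do under eq_bigr do rewrite E.
under eq_bigr do rewrite exchange_big /=.
rewrite exchange_big /=.
apply: eq_bigr => x _; rewrite exchange_big /=.
apply: eq_bigr => a _.
rewrite -(sum_pick _ (fun v => f v x a)) //; apply: eq_bigr => v _.
by rewrite nb_eqC.
Qed.
From mathcomp Require Import lra.

Definition Gf (R : realType) (um UM : R) (av ax br : bool) : R :=
  if av then (if ax then - (UM / 2) * br%:R else if br then - UM else um) else 0.

Lemma keyE (R : realType) (q : nat) (u : 'I_q -> 'I_q -> R) (um UM : R)
  (u_ge0 : forall k l, 0 <= u k l) (u_diag : forall k, u k k = 0)
  (hU : forall k l, u k l <= UM) (hu : forall k l, k != l -> um <= u k l)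
  k l k0 l0 :
  Gf um UM (k != k0) (l != l0) (k0 != l0) + Gf um UM (l != l0) (k != k0) (l0 != k0)
   <= u k l - u k0 l0.
Proof.
rewrite /Gf.
have h1 := u_ge0 k l; have h2 := hU k0 l0; have h3 := u_ge0 k0 l0.
case: (eqVneq k k0) => [->|hk]; case: (eqVneq l l0) => [->|hl];
  case: (eqVneq k0 l0) => [e|hne] /=; rewrite ?eqxx /=.
all: try lra.
all: try (subst; rewrite u_diag; have := hu _ _ hk; lra).
all: try (subst; rewrite u_diag; rewrite eq_sym in hl; have := hu _ _ hl; lra).
all: try (subst; rewrite u_diag; lra).
all: have := u_ge0 k0 l; have := u_ge0 k l0; lra.
Qed.

Lemma GfL (R : realType) (um UM : R) (hum : 0 <= um) (hUM : 0 <= UM) (av ax br : bool) :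
  av%:R * um - av%:R * um * ax%:R - av%:R * (um + UM) * br%:R <= Gf um UM av ax br.
Proof.
rewrite /Gf; case: av; case: ax; case: br => /=; lra.
Qed.

Lemma sum_isp (R : realType) (d : nat) (v : vertex d) :
  \sum_(a : 'I_d.+1) ((isp v a)%:R : R) <= 1.
Proof.
rewrite /isp; case: (val v) => [|b t].
  by rewrite big1 // ler01.
rewrite (bigD1 b) //= eqxx big1 ?addr0 // => a hab.
by rewrite eq_sym in hab; rewrite (negbTE hab).
Qed.

Lemma count_sum (R : realType) (T : Type) (P : pred T) (S : seq T) :
  ((count P S)%:R : R) = \sum_(v <- S) ((P v)%:R : R).
Proof.
elim: S => [|x S IH] /=; first by rewrite big_nil.
by rewrite big_cons natrD IH.
Qed.

Theorem mainTheorem5 (R : realType) (q : nat) (u : 'I_q -> 'I_q -> R)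
  (u_ge0 : forall k l, 0 <= u k l) (u_diag : forall k, u k k = 0)
  (u_pos : 0 < umin u) (dmax : nat) (d : nat)
  (hd : (2 + Num.floor (dmax%:R * (umin u + umax u) / umin u) <= d%:Z)%R)
  (w0 : vertex d -> 'I_q)
  (hD : forall v : vertex d, (broken_deg w0 v <= dmax)%N) :
  stable u w0 ((d%:R - 1) * umin u - dmax%:R * (umin u + umax u)).
Proof.
have hU : forall k l, u k l <= umax u.
  move=> k l; rewrite /umax.
  have h1 := le_bigmax 0 (fun l => u k l) l.
  have h2 := le_bigmax 0 (fun k => \big[Num.max/0]_(l : 'I_q) u k l) k.
  exact: le_trans h1 h2.
have hu : forall k l, k != l -> umin u <= u k l.
  move=> k l hkl; rewrite /umin.
  have h1 := bigmin_le (umax u) k (fun k => \big[Num.min/umax u]_(l : 'I_q | l != k) u k l).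
  have h2 := @bigmin_le_cond _ _ _ (umax u) l (fun l => l != k) (fun l => u k l).
  by apply: le_trans h1 (h2 _); rewrite eq_sym.
have U0 : 0 <= umax u by rewrite /umax; apply: bigmax_ge_id.
set um := umin u in u_pos hd hu *; set UM := umax u in hd hU U0 *.
split.
  have : Num.floor (dmax%:R * (um + UM) / um) < (d%:Z - 1)%R.
    by move: hd; rewrite -ltzD1 => hd; lra.
  rewrite floor_lt_int rmorphB /= => h.
  rewrite -[d%:~R]/(d%:R) -[1%:~R]/(1%:R) ltr_pdivrMr // in h.
  lra.
move=> w S hS hsub.
pose A v := w v != w0 v.
pose G v x := Gf um UM (A v) (A x) (w0 v != w0 x).
have hnot : forall x, x \notin S -> ~~ A x.
  by move=> x hx; apply/negP => /hsub; rewrite (negbTE hx).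
have step1 : \sum_(v <- S) \sum_(a : 'I_d.+1) G v (nb v a) <= Hdiff u w w0 S.
  rewrite /Hdiff.
  apply: le_trans (_ : _ <= \sum_(v <- S) \sum_(a : 'I_d.+1)
     ((if nb v a \in S then 2^-1 * G v (nb v a) else G v (nb v a)) +
      (if nb v a \in S then 2^-1 * G (nb v a) v else 0))) _.
    under [X in _ <= X]eq_bigr do rewrite big_split /=.
    rewrite big_split /=.
    have := swap (fun v x (_ : 'I_d.+1) => 2^-1 * G x v) hS; move=> /= ->.
    rewrite -big_split /= le_eqVlt; apply/orP; left; apply/eqP; apply: eq_bigr => v _.
    rewrite -big_split /=; apply: eq_bigr => a _.
    by case: ifP => _; lra.
  apply: ler_sum => v _; apply: ler_sum => a _.
  have K := keyE u_ge0 u_diag hU hu (w v) (w (nb v a)) (w0 v) (w0 (nb v a)).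
  case: ifP => hx.
    rewrite /G /A; lra.
  have Ax : (w (nb v a) != w0 (nb v a)) = false.
    by apply/negbTE/hnot; rewrite hx.
  rewrite /G /A Ax /=; rewrite Ax /= in K.
  lra.
pose N v := \sum_(a : 'I_d.+1) ((A (nb v a))%:R : R).
pose c := (d%:R - 1) * um - dmax%:R * (um + UM).
have um0 : 0 <= um by apply: ltW.
have step2 : forall v, (A v)%:R * c + um * (2 * (A v)%:R - (A v)%:R * N v)
     <= \sum_(a : 'I_d.+1) G v (nb v a).
  move=> v.
  apply: le_trans (_ : _ <= \sum_(a : 'I_d.+1) ((A v)%:R * um - (A v)%:R * um * (A (nb v a))%:R
      - (A v)%:R * (um + UM) * (w0 v != w0 (nb v a))%:R)) _; last first.
    by apply: ler_sum => a _; apply: GfL.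
  rewrite !sumrB -!mulr_sumr sumr_const card_ord.
  have BD : \sum_(a : 'I_d.+1) ((w0 v != w0 (nb v a))%:R : R) = (broken_deg w0 v)%:R.
    rewrite /broken_deg -sum1_card natr_sum [RHS]big_mkcond /=.
    by apply: eq_bigr => a _; rewrite !inE; case: (w0 v != _).
  have hB : ((broken_deg w0 v)%:R : R) <= dmax%:R by rewrite ler_nat.
  rewrite BD -/(N v) /c.
  have hB2 : (um + UM) * (broken_deg w0 v)%:R <= (um + UM) * dmax%:R.
    by apply: ler_wpM2l => //; lra.
  rewrite -mulr_natr -addn1 natrD.
  case: (A v) => /=; rewrite ?mul1r ?mul0r ?mulr0 ?mul0r; lra.
have hP : \sum_(v <- S) \sum_(a : 'I_d.+1) ((A v)%:R * (isp v a)%:R : R)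
     <= \sum_(v <- S) ((A v)%:R : R).
  apply: ler_sum => v _; rewrite -mulr_sumr.
  have := sum_isp R v; case: (A v) => /=; rewrite ?mul1r ?mul0r //.
have step4 : \sum_(v <- S) ((A v)%:R * N v) <= 2 * \sum_(v <- S) ((A v)%:R : R).
  have e1 : forall v, (A v)%:R * N v =
     \sum_(a : 'I_d.+1) ((A v)%:R * (A (nb v a))%:R * (isp v a)%:R) +
     \sum_(a : 'I_d.+1) (if nb v a \in S then
          (A v)%:R * (A (nb v a))%:R * (~~ isp v a)%:R else 0).
    move=> v; rewrite /N mulr_sumr -big_split; apply: eq_bigr => a _ /=.
    case: (boolP (nb v a \in S)) => hx; last rewrite (negbTE (hnot _ hx)).
      by case: (isp v a); case: (A v); case: (A (nb v a)) => /=; lra.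
    by case: (isp v a); case: (A v) => /=; lra.
  rewrite (eq_bigr _ (fun v _ => e1 v)) big_split /=.
  have := swap (fun v x a => ((A v)%:R * (A x)%:R * (~~ isp v a)%:R : R)) hS; move=> /= ->.
  have h1 : \sum_(v <- S) \sum_(a : 'I_d.+1) ((A v)%:R * (A (nb v a))%:R * (isp v a)%:R : R)
      <= \sum_(v <- S) \sum_(a : 'I_d.+1) ((A v)%:R * (isp v a)%:R : R).
    apply: ler_sum => v _; apply: ler_sum => a _.
    by case: (isp v a); case: (A v); case: (A (nb v a)) => /=; lra.
  have h2 : \sum_(v <- S) \sum_(a : 'I_d.+1) (if nb v a \in S then
         ((A (nb v a))%:R * (A v)%:R * (~~ isp (nb v a) a)%:R : R) else 0)
      <= \sum_(v <- S) \sum_(a : 'I_d.+1) ((A v)%:R * (isp v a)%:R : R).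
    apply: ler_sum => v _; apply: ler_sum => a _.
    rewrite isp_nb negbK.
    by case: ifP => _; case: (isp v a); case: (A v); case: (A (nb v a)) => /=; lra.
  lra.
rewrite count_sum -/c.
apply: le_trans step1.
apply: le_trans (_ : _ <= \sum_(v <- S) ((A v)%:R * c + um * (2 * (A v)%:R - (A v)%:R * N v))) _; last first.
  by apply: ler_sum => v _; apply: step2.
rewrite big_split /=.
have e2 : \sum_(v <- S) ((A v)%:R * c) = c * \sum_(v <- S) ((w v != w0 v)%:R : R).
  by rewrite mulr_sumr; apply: eq_bigr => v _; rewrite mulrC.
have e3 : \sum_(v <- S) (um * (2 * (A v)%:R - (A v)%:R * N v)) =
    um * (2 * \sum_(v <- S) ((A v)%:R : R) - \sum_(v <- S) ((A v)%:R * N v)).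
  by rewrite !mulr_sumr -sumrB mulr_sumr.
rewrite e2 e3.
have : 0 <= um * (2 * \sum_(v <- S) ((A v)%:R : R) - \sum_(v <- S) ((A v)%:R * N v)).
  by apply: mulr_ge0 => //; lra.
lra.
Qed.
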